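(* Let $A$ be a set (the assembly) and let $\mathcal{E}$ be a set of subsets of $A$ (the efficacious coalitions) such that (C1) for every $K\subseteq A$, $K\in\mathcal{E}$ if and only if $A\setminus K\notin\mathcal{E}$; and (C2) if $K\in\mathcal{E}$ and $K\subseteq L\subseteq A$, then $L\in\mathcal{E}$. Suppose each member of $A$ chooses one of the six strict total orders on three candidates $a,b,c$, labelled by $\mathbb{Z}/6\mathbb{Z}$ as follows: $1: a>b>c$, $2: a>c>b$, $3: c>a>b$, $4: c>b>a$, $5: b>c>a$, $6: b>a>c$. For $p\in\mathbb{Z}/6\mathbb{Z}$ let $K(p)$ be the set of members who chose ranking $p$, and write $K(p,q)=K(p)\cup K(q)$. Suppose the following condition (S) holds: there exists $p\in\mathbb{Z}/6\mathbb{Z}$ such that $K(p,p+1)=\emptyset$ or $K(p,p+3)=\emptyset$. Then condition (T) holds: there exists $p\in\mathbb{Z}/6\mathbb{Z}$ such that $K(p,p+1)\in\mathcal{E}$.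
   Context: Indices of $K(\cdot)$ are taken modulo $6$. The sets $K(1),\dots,K(6)$ partition $A$. *)

(* Defs.v *)
From mathcomp Require Import all_boot all_algebra.
From mathcomp Require Import classical_sets.
Set Implicit Arguments. Unset Strict Implicit. Unset Printing Implicit Defensive.
Import GRing.Theory.
Local Open Scope classical_set_scope.
Local Open Scope ring_scope.

(* Rankings of the three candidates a,b,c are labelled by 'Z_6 :
   1: a>b>c, 2: a>c>b, 3: c>a>b, 4: c>b>a, 5: b>c>a, 6 (= 0): b>a>c. *)

Definition Kset (A : Type) (r : A -> 'Z_6) (p : 'Z_6) : set A :=
  [set x | r x = p].

Definition Kpair (A : Type) (r : A -> 'Z_6) (p q : 'Z_6) : set A :=
  Kset r p `|` Kset r q.

Definition C1 (A : Type) (E : set (set A)) : Prop :=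
  forall K : set A, E K <-> ~ E (~` K).

Definition C2 (A : Type) (E : set (set A)) : Prop :=
  forall K L : set A, E K -> K `<=` L -> E L.

Definition condS (A : Type) (r : A -> 'Z_6) : Prop :=
  exists p : 'Z_6, Kpair r p (p + 1) = set0 \/ Kpair r p (p + 3%:R) = set0.

Definition condT (A : Type) (E : set (set A)) (r : A -> 'Z_6) : Prop :=
  exists p : 'Z_6, E (Kpair r p (p + 1)).

(* Main.v *)
Require Import Defs.
From mathcomp Require Import all_boot all_algebra.
From mathcomp Require Import classical_sets.
Local Open Scope classical_set_scope.
Local Open Scope ring_scope.
Lemma key1 (p y : 'Z_6) : (y != p) ==> (y != p+1) ==>
  (((y == p+2%:R) || (y == p+2%:R+1)) == ~~ ((y == p+4%:R) || (y == p+4%:R+1))).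
Proof.
case: p => [[|[|[|[|[|[|//]]]]]] ?]; case: y => [[|[|[|[|[|[|//]]]]]] ?]; vm_compute; reflexivity.
Qed.
Lemma key2 (p y : 'Z_6) : (y != p) ==> (y != p+3%:R) ==>
  (((y == p+1) || (y == p+1+1)) == ~~ ((y == p+4%:R) || (y == p+4%:R+1))).
Proof.
case: p => [[|[|[|[|[|[|//]]]]]] ?]; case: y => [[|[|[|[|[|[|//]]]]]] ?]; vm_compute; reflexivity.
Qed.

Lemma EorC (A : Type) (E : set (set A)) X : C1 E -> E X \/ E (~` X).
Proof.
move=> h; case: (boolp.pselect (E X)) => [|nX]; first by left.
right; apply/h; by rewrite setCK.
Qed.

Lemma compl_eq (A : Type) (r : A -> 'Z_6) q s :
  (forall x, ((r x == q) || (r x == q + 1)) = ~~ ((r x == s) || (r x == s + 1))) ->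
  ~` Kpair r q (q + 1) = Kpair r s (s + 1).
Proof.
move=> H; apply/seteqP; split=> x; rewrite /Kpair /Kset /= => hx.
  have : ~~ ((r x == q) || (r x == q + 1)).
    by apply/negP => /orP[/eqP|/eqP] e; apply: hx; [left|right].
  by rewrite H negbK => /orP[/eqP|/eqP]; [left|right].
move=> hq; have hs : (r x == s) || (r x == s + 1).
  by case: hx => ->; rewrite eqxx ?orbT.
have hq' : (r x == q) || (r x == q + 1).
  by case: hq => ->; rewrite eqxx ?orbT.
by move: hq'; rewrite H hs.
Qed.

Theorem mainTheorem1 (A : Type) (E : set (set A)) (r : A -> 'Z_6) :
  C1 E -> C2 E -> condS r -> condT E r.
Proof.
move=> h1 _ [p [H|H]].
- have Hx : forall x, r x != p /\ r x != p + 1.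
    move=> x; have hK : ~ Kpair r p (p + 1) x by rewrite H.
    by split; apply/eqP => e; apply: hK; rewrite /Kpair /Kset /=; [left|right].
  have e := @compl_eq A r (p + 2%:R) (p + 4%:R).
  case: (@EorC A E (Kpair r (p + 2%:R) (p + 2%:R + 1)) h1) => hE.
    by exists (p + 2%:R).
  exists (p + 4%:R); rewrite -e //.
  move=> x; case: (Hx x) => a b; have := key1 p (r x); rewrite a b /=.
  by move/eqP.
- have Hx : forall x, r x != p /\ r x != p + 3%:R.
    move=> x; have hK : ~ Kpair r p (p + 3%:R) x by rewrite H.
    by split; apply/eqP => e; apply: hK; rewrite /Kpair /Kset /=; [left|right].
  have e := @compl_eq A r (p + 1) (p + 4%:R).
  case: (@EorC A E (Kpair r (p + 1) (p + 1 + 1)) h1) => hE.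
    by exists (p + 1).
  exists (p + 4%:R); rewrite -e //.
  move=> x; case: (Hx x) => a b; have := key2 p (r x); rewrite a b /=.
  by move/eqP.
Qed.
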